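(* Let $([v_{ij}:v_{ji}])$ be common lines data for planes $P_1,\dots,P_N$, and let $i,j,k,m$ be distinct indices such that the triples $(i,j,k)$ and $(i,j,m)$ strictly satisfy the spherical triangle inequalities. Choose unit-norm representatives of all the pairs involved and set $$L_{ijk,ijm}=\big(v_{ki}\cdot v_{kj}-(v_{ij}\cdot v_{ik})(v_{ji}\cdot v_{jk})\big)\,\big|\det[v_{ij},v_{im}]\det[v_{ji},v_{jm}]\big|-\sigma\big(v_{mi}\cdot v_{mj}-(v_{ij}\cdot v_{im})(v_{ji}\cdot v_{jm})\big)\,\big|\det[v_{ij},v_{ik}]\det[v_{ji},v_{jk}]\big|,$$ where $\sigma=\operatorname{sign}\big(\det[v_{ij},v_{ik}]\det[v_{ij},v_{im}]\det[v_{ji},v_{jk}]\det[v_{ji},v_{jm}]\big)$. Suppose $L_{ijk,ijm}=0$. Then for any frames $F_i,F_j,F_k$ realizing the triple $(i,j,k)$ and any frames $G_i,G_j,G_m$ realizing the triple $(i,j,m)$, there exists a unique $A\in\mathrm O(3)$ with $AF_i=G_i$ and $AF_j=G_j$.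
   Context: A frame is an ordered pair $(a,b)$ of orthonormal vectors in $\mathbb R^3$. Planes $P_1=\dots=P_N=\mathbb R^2$; a frame $F_i=(a_i,b_i)$ gives the embedding $\iota_i:P_i\to\mathbb R^3$, $\iota_i(x,y)=xa_i+yb_i$. $\mathrm O(3)$ is the group of all $3\times3$ orthogonal matrices, acting on frames by $A(a,b)=(Aa,Ab)$. Common lines data is a collection $([v_{ij}:v_{ji}])_{1\le i<j\le N}$ of elements of $\mathbb P(P_i\times P_j)$ (nonzero pairs $(v_{ij},v_{ji})\in\mathbb R^2\times\mathbb R^2$ up to nonzero scaling) with $\|v_{ij}\|^2=\|v_{ji}\|^2$; indices of a pair may be written in either order. Frames $F_i,F_j,F_k$ realize the triple $(i,j,k)$ if $\iota_i(v_{ij})=\iota_j(v_{ji})$, $\iota_i(v_{ik})=\iota_k(v_{ki})$, $\iota_j(v_{jk})=\iota_k(v_{kj})$. For a triple and representatives, $\alpha_{ijk}=\cos^{-1}\frac{v_{ij}\cdot v_{ik}}{\|v_{ij}\|\|v_{ik}\|}$, $\beta_{ijk}=\cos^{-1}\frac{v_{ji}\cdot v_{jk}}{\|v_{ji}\|\|v_{jk}\|}$, $\gamma_{ijk}=\cos^{-1}\frac{v_{ki}\cdot v_{kj}}{\|v_{ki}\|\|v_{kj}\|}$; the triple strictly satisfies the spherical triangle inequalities if for any representatives $\beta+\gamma>\alpha$, $\alpha+\gamma>\beta$, $\alpha+\beta>\gamma$, $\alpha+\beta+\gamma<2\pi$. $\det[u,w]$ denotes the determinant of the $2\times2$ matrix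 with columns $u,w$. *)

(* Defs.v *)
From HB Require Import structures.
From mathcomp Require Import all_boot all_order all_algebra.
From mathcomp Require Import all_classical all_reals all_analysis.
Set Implicit Arguments. Unset Strict Implicit. Unset Printing Implicit Defensive.
Import Order.TTheory GRing.Theory Num.Theory.
Local Open Scope ring_scope.

Section Defs.
Variable R : realType.

Definition dot2 (u w : R * R) : R := u.1 * w.1 + u.2 * w.2.
Definition norm2 (u : R * R) : R := Num.sqrt (dot2 u u).
Definition det2 (u w : R * R) : R := u.1 * w.2 - w.1 * u.2.
Definition scale2 (c : R) (u : R * R) : R * R := (c * u.1, c * u.2).
Definition normalize2 (u : R * R) : R * R := scale2 (norm2 u)^-1 u.

Definition dot3 (a b : 'cV[R]_3) : R := \sum_(l < 3) a l 0 * b l 0.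
Definition is_frame (F : 'cV[R]_3 * 'cV[R]_3) : Prop :=
  dot3 F.1 F.1 = 1 /\ dot3 F.2 F.2 = 1 /\ dot3 F.1 F.2 = 0.
Definition iota (F : 'cV[R]_3 * 'cV[R]_3) (x : R * R) : 'cV[R]_3 :=
  x.1 *: F.1 + x.2 *: F.2.
Definition is_O3 (A : 'M[R]_3) : Prop := A^T *m A = 1%:M.
Definition act (A : 'M[R]_3) (F : 'cV[R]_3 * 'cV[R]_3) : 'cV[R]_3 * 'cV[R]_3 :=
  (A *m F.1, A *m F.2).

(* Common lines data for planes indexed by 'I_N, given through representatives:
   v i j = v_ij, and the element for the pair {i,j} is [v i j : v j i]. *)
Definition common_lines_data (N : nat) (v : 'I_N -> 'I_N -> R * R) : Prop :=
  forall i j : 'I_N, i != j ->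
    ((v i j, v j i) != ((0, 0), (0, 0))) /\ dot2 (v i j) (v i j) = dot2 (v j i) (v j i).

Definition realizes (N : nat) (v : 'I_N -> 'I_N -> R * R) (i j k : 'I_N)
  (Fi Fj Fk : 'cV[R]_3 * 'cV[R]_3) : Prop :=
  iota Fi (v i j) = iota Fj (v j i) /\
  iota Fi (v i k) = iota Fk (v k i) /\
  iota Fj (v j k) = iota Fk (v k j).

Definition angle2 (u w : R * R) : R := acos (dot2 u w / (norm2 u * norm2 w)).

(* strict spherical triangle inequalities, for ANY representatives
   (c1, c2, c3 rescale the pairs {i,j}, {i,k}, {j,k}) *)
Definition strict_sti (N : nat) (v : 'I_N -> 'I_N -> R * R) (i j k : 'I_N) : Prop :=
  forall c1 c2 c3 : R, c1 != 0 -> c2 != 0 -> c3 != 0 ->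
    let vij := scale2 c1 (v i j) in let vji := scale2 c1 (v j i) in
    let vik := scale2 c2 (v i k) in let vki := scale2 c2 (v k i) in
    let vjk := scale2 c3 (v j k) in let vkj := scale2 c3 (v k j) in
    let a := angle2 vij vik in
    let b := angle2 vji vjk in
    let g := angle2 vki vkj in
    [/\ b + g > a, a + g > b, a + b > g & a + b + g < 2 * pi].

Definition L_ijk_ijm (N : nat) (v : 'I_N -> 'I_N -> R * R) (i j k m : 'I_N) : R :=
  let u := fun p q => normalize2 (v p q) in
  let sigma := Num.sg (det2 (u i j) (u i k) * det2 (u i j) (u i m)
                       * det2 (u j i) (u j k) * det2 (u j i) (u j m)) in
  (dot2 (u k i) (u k j) - dot2 (u i j) (u i k) * dot2 (u j i) (u j k))
    * `|det2 (u i j) (u i m) * det2 (u j i) (u j m)|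
  - sigma * (dot2 (u m i) (u m j) - dot2 (u i j) (u i m) * dot2 (u j i) (u j m))
    * `|det2 (u i j) (u i k) * det2 (u j i) (u j k)|.

End Defs.

(* Main.v *)
Require Import Defs.
From HB Require Import structures.
From mathcomp Require Import all_boot all_order all_algebra.
From mathcomp Require Import all_classical all_reals all_analysis.
From mathcomp Require Import ring lra.
Import Order.TTheory GRing.Theory Num.Theory.
Local Open Scope ring_scope.

Set Implicit Arguments. Unset Strict Implicit.
Local Notation iota := Defs.iota.


Lemma tri_ineq (R : realType) (a b g : R) :
  0 <= a <= pi -> 0 <= b <= pi -> 0 <= g <= pi ->
  b + g > a -> a + g > b -> a + b > g -> a + b + g < 2 * pi ->
  [/\ 0 < sin a, 0 < sin b, cos (a + b) < cos g & cos g < cos (a - b)].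
Proof.
move=> /andP[a0 api] /andP[b0 bpi] /andP[g0 gpi] h1 h2 h3 h4.
have pi0 := @pi_gt0 R.
split.
- apply: sin_gt0_pi; apply/andP; split; lra.
- apply: sin_gt0_pi; apply/andP; split; lra.
- have [abpi|abpi] := lerP (a + b) pi.
    have I1 : a + b \in `[0, pi] by rewrite in_itv /=; apply/andP; split; lra.
    by rewrite ltr_cos ?in_itv /= ?g0 ?gpi.
  have -> : cos (a + b) = cos (pi *+ 2 - (a + b)).
    by rewrite cosB cos2pi sin2pi mul0r addr0 mul1r.
  have I1 : pi *+ 2 - (a + b) \in `[0, pi].
    by rewrite in_itv /= mulr2n; apply/andP; split; lra.
  by rewrite ltr_cos ?in_itv /= ?g0 ?gpi // mulr2n; lra.
- have [ba|ba] := lerP b a.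
    have I1 : a - b \in `[0, pi] by rewrite in_itv /=; apply/andP; split; lra.
    by rewrite ltr_cos ?in_itv /= ?g0 ?gpi //; lra.
  rewrite -(cosN (a - b)) opprB.
  have I1 : b - a \in `[0, pi] by rewrite in_itv /=; apply/andP; split; lra.
  by rewrite ltr_cos ?in_itv /= ?g0 ?gpi //; lra.
Qed.


Section Vec.
Variable R : realType.
Implicit Types (a b c : 'cV[R]_3) (x y z : R * R) (F G : 'cV[R]_3 * 'cV[R]_3).

Lemma dot3C a b : dot3 a b = dot3 b a.
Proof. by rewrite /dot3; apply: eq_bigr => l _; rewrite mulrC. Qed.
Lemma dot3Dl a b c : dot3 (a + b) c = dot3 a c + dot3 b c.
Proof. by rewrite /dot3 -big_split; apply: eq_bigr => l _; rewrite !mxE mulrDl. Qed.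
Lemma dot3Zl (r : R) a c : dot3 (r *: a) c = r * dot3 a c.
Proof. by rewrite /dot3 mulr_sumr; apply: eq_bigr => l _; rewrite !mxE mulrA. Qed.
Lemma dot3Nl a c : dot3 (- a) c = - dot3 a c.
Proof. by rewrite -scaleN1r dot3Zl mulN1r. Qed.
Lemma dot3Dr a b c : dot3 c (a + b) = dot3 c a + dot3 c b.
Proof. by rewrite dot3C dot3Dl !(dot3C c). Qed.
Lemma dot3Zr (r : R) a c : dot3 c (r *: a) = r * dot3 c a.
Proof. by rewrite dot3C dot3Zl dot3C. Qed.
Lemma dot3Nr a c : dot3 c (- a) = - dot3 c a.
Proof. by rewrite dot3C dot3Nl dot3C. Qed.

Definition perp x : R * R := (- x.2, x.1).

Lemma iota_dot F x y : is_frame F -> dot3 (iota F x) (iota F y) = dot2 x y.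
Proof.
case=> h1 [h2 h3]; rewrite /iota /dot2.
rewrite !(dot3Dl, dot3Dr, dot3Zl, dot3Zr) h1 h2 (dot3C (snd F)) h3; ring.
Qed.

Lemma iotaZ F r x : iota F (scale2 r x) = r *: iota F x.
Proof. by rewrite /iota /= scalerDr !scalerA. Qed.

Lemma iota_decomp F x y : dot2 x x = 1 ->
  iota F y = dot2 x y *: iota F x + det2 x y *: iota F (perp x).
Proof.
rewrite /dot2 /det2 /iota /= => hx.
rewrite !scalerDr !scalerA addrACA -!scalerDl.
congr (_ *: _ + _ *: _).
- by rewrite -[LHS]mulr1 -hx; ring.
- by rewrite -[LHS]mulr1 -hx; ring.
Qed.

Lemma perp_dot x : dot2 (perp x) (perp x) = dot2 x x.
Proof. by rewrite /dot2 /=; ring. Qed.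
Lemma perp_dot0 x : dot2 x (perp x) = 0.
Proof. by rewrite /dot2 /=; ring. Qed.

Lemma core Fi Fj Fk x y xk yk zi zj :
  is_frame Fi -> is_frame Fj -> is_frame Fk -> dot2 x x = 1 -> dot2 y y = 1 ->
  iota Fi x = iota Fj y -> iota Fi xk = iota Fk zi -> iota Fj yk = iota Fk zj ->
  dot2 zi zj = dot2 x xk * dot2 y yk +
     det2 x xk * det2 y yk * dot3 (iota Fi (perp x)) (iota Fj (perp y)).
Proof.
move=> fi fj fk hx hy E1 E2 E3.
rewrite -(iota_dot zi zj fk) -E2 -E3 (iota_decomp Fi xk hx) (iota_decomp Fj yk hy).
have h1 : dot3 (iota Fi x) (iota Fj y) = 1 by rewrite -E1 iota_dot.
have h2 : dot3 (iota Fi x) (iota Fj (perp y)) = 0 by rewrite E1 iota_dot // perp_dot0.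
have h3 : dot3 (iota Fi (perp x)) (iota Fj y) = 0
  by rewrite -E1 iota_dot // /dot2 /=; ring.
move: h1 h2 h3.
move: (iota Fi x) (iota Fi (perp x)) (iota Fj y) (iota Fj (perp y)) => c p cj q h1 h2 h3.
rewrite !(dot3Dl, dot3Dr, dot3Zl, dot3Zr) h1 h2 h3; ring.
Qed.
End Vec.


Section LA.
Variable R : realType.
Implicit Types (a b c p q n : 'cV[R]_3).

Definition colM c p n : 'M[R]_3 := \matrix_(r, l) (nth 0 [:: c; p; n] l) r 0.

Lemma colM_mul (X : 'M[R]_3) c p n r l :
  (X *m colM c p n) r l = (X *m nth 0 [:: c; p; n] l) r 0.
Proof. by rewrite !mxE; apply: eq_bigr => s _; rewrite mxE. Qed.

Lemma colM_eq (X : 'M[R]_3) c p n c' p' n' :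
  X *m c = c' -> X *m p = p' -> X *m n = n' -> X *m colM c p n = colM c' p' n'.
Proof.
move=> hc hp hn; apply/matrixP => r l; rewrite colM_mul.
have E : X *m nth 0 [:: c; p; n] l = nth 0 [:: c'; p'; n'] l.
  by case: l => [[|[|[|l]]] Hl].
by rewrite E mxE.
Qed.

Lemma colM_inv (X : 'M[R]_3) c p n c' p' n' :
  X *m colM c p n = colM c' p' n' -> [/\ X *m c = c', X *m p = p' & X *m n = n'].
Proof.
move=> h.
have H (l : 'I_3) : X *m nth 0 [:: c; p; n] l = nth 0 [:: c'; p'; n'] l.
  apply/matrixP => r z; rewrite (ord1 z) -colM_mul h mxE //.
split; [exact: (H 0) | exact: (H 1) | exact: (H 2%:R)].
Qed.

Lemma colM_orth c p n : dot3 c c = 1 -> dot3 p p = 1 -> dot3 n n = 1 ->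
  dot3 c p = 0 -> dot3 c n = 0 -> dot3 p n = 0 ->
  (colM c p n)^T *m colM c p n = 1%:M.
Proof.
move=> h1 h2 h3 h4 h5 h6; apply/matrixP => a b.
have -> : ((colM c p n)^T *m colM c p n) a b =
   dot3 (nth 0 [:: c; p; n] a) (nth 0 [:: c; p; n] b).
  by rewrite !mxE /dot3; apply: eq_bigr => r _; rewrite !mxE.
rewrite mxE.
case: a => [[|[|[|a]]] Ha] //; case: b => [[|[|[|b]]] Hb] //=.
  by rewrite dot3C.
  by rewrite dot3C.
by rewrite dot3C.
Qed.

Lemma build c p q c' p' q' t :
  dot3 c c = 1 -> dot3 p p = 1 -> dot3 q q = 1 ->
  dot3 c p = 0 -> dot3 c q = 0 -> dot3 p q = t ->
  dot3 c' c' = 1 -> dot3 p' p' = 1 -> dot3 q' q' = 1 ->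
  dot3 c' p' = 0 -> dot3 c' q' = 0 -> dot3 p' q' = t -> t ^+ 2 < 1 ->
  exists A : 'M[R]_3, [/\ A^T *m A = 1%:M, A *m c = c', A *m p = p' & A *m q = q'] /\
    forall B : 'M[R]_3, B *m c = c' -> B *m p = p' -> B *m q = q' -> B = A.
Proof.
move=> h1 h2 h3 h4 h5 h6 g1 g2 g3 g4 g5 g6 ht.
pose s := Num.sqrt (1 - t ^+ 2).
have s0 : 0 < s by rewrite sqrtr_gt0 subr_gt0.
have s2 : s ^+ 2 = 1 - t ^+ 2 by rewrite sqr_sqrtr // subr_ge0 ltW.
have sn0 : s != 0 by rewrite gt_eqF.
pose n := s^-1 *: (q - t *: p).
pose n' := s^-1 *: (q' - t *: p').
have ON (a b d : 'cV[R]_3) : dot3 a a = 1 -> dot3 b b = 1 -> dot3 d d = 1 ->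
    dot3 a b = 0 -> dot3 a d = 0 -> dot3 b d = t ->
    (colM a b (s^-1 *: (d - t *: b)))^T *m colM a b (s^-1 *: (d - t *: b)) = 1%:M.
  move=> k1 k2 k3 k4 k5 k6; apply: colM_orth => //.
  - rewrite !(dot3Zl, dot3Zr, dot3Dl, dot3Dr, dot3Nl, dot3Nr) k2 k3 (dot3C d b) k6.
    have -> : forall z : R, z^-1 * (z^-1 * (1 - t * t) + z^-1 * (- (t * t) - t * - (t * 1))) = (1 - t ^+ 2) / z ^+ 2.
      by move=> z; rewrite expr2 invfM; ring.
    by rewrite -s2 divff // expf_neq0.
  - by rewrite !(dot3Zl, dot3Zr, dot3Dl, dot3Dr, dot3Nl, dot3Nr) k4 k5; ring.
  - by rewrite !(dot3Zl, dot3Zr, dot3Dl, dot3Dr, dot3Nl, dot3Nr) k2 k6; ring.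
pose M := colM c p n; pose N := colM c' p' n'.
have MM : M^T *m M = 1%:M by apply: ON.
have NN : N^T *m N = 1%:M by apply: ON.
have MM' : M *m M^T = 1%:M by apply: mulmx1C.
have qn : q = t *: p + s *: n.
  by rewrite /n scalerA mulfV // scale1r addrC subrK.
have qn' : q' = t *: p' + s *: n'.
  by rewrite /n' scalerA mulfV // scale1r addrC subrK.
pose A := N *m M^T.
have AM : A *m M = N by rewrite /A -mulmxA MM mulmx1.
have [Ac Ap An] := colM_inv AM.
exists A; split.
  split => //.
  - by rewrite /A trmx_mul trmxK mulmxA -(mulmxA M) NN mulmx1 MM'.
  - by rewrite qn qn' mulmxDr -(scalemxAr t) -(scalemxAr s) Ap An.
move=> B Bc Bp Bq.
have Bn : B *m n = n'.
  by rewrite /n /n' -scalemxAr mulmxBr -scalemxAr Bq Bp.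
have BM : B *m M = N by apply: colM_eq.
by rewrite -[B]mulmx1 -MM' mulmxA BM.
Qed.
End LA.


Section Sc.
Variable R : realType.
Implicit Types (x y : R * R).

Lemma lagrange x y : dot2 x y ^+ 2 + det2 x y ^+ 2 = dot2 x x * dot2 y y.
Proof. by rewrite /dot2 /det2; ring. Qed.

Lemma tri_bound (Ca Sa Cb Sb Cg Sg : R) :
  Ca ^+ 2 + Sa ^+ 2 = 1 -> Cb ^+ 2 + Sb ^+ 2 = 1 -> Cg ^+ 2 + Sg ^+ 2 = 1 ->
  acos Cb + acos Cg > acos Ca -> acos Ca + acos Cg > acos Cb ->
  acos Ca + acos Cb > acos Cg -> acos Ca + acos Cb + acos Cg < 2 * pi ->
  [/\ Sa != 0, Sb != 0 & `|Cg - Ca * Cb| < `|Sa * Sb|].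
Proof.
move=> ha hb hg h1 h2 h3 h4.
have bd (C0 S0 : R) : C0 ^+ 2 + S0 ^+ 2 = 1 -> -1 <= C0 <= 1.
  move=> e; rewrite expr2 in e; apply/andP; split; nra.
have ia := bd _ _ ha; have ib := bd _ _ hb; have ig := bd _ _ hg.
have cK (C0 : R) : -1 <= C0 <= 1 -> cos (acos C0) = C0.
  by move=> hC; apply: acosK; rewrite in_itv /= hC.
have sK (C0 S0 : R) : C0 ^+ 2 + S0 ^+ 2 = 1 -> sin (acos C0) = `|S0|.
  move=> e; rewrite sin_acos ?(bd _ _ e) //.
  have -> : 1 - C0 ^+ 2 = S0 ^+ 2 by rewrite -e; ring.
  by rewrite sqrtr_sqr.
have r (C0 : R) : -1 <= C0 <= 1 -> 0 <= acos C0 <= pi.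
  by move=> hC; rewrite acos_ge0 ?acos_lepi.
have [sa0 sb0 c1 c2] := tri_ineq (r _ ia) (r _ ib) (r _ ig) h1 h2 h3 h4.
rewrite cosD cosB !cK // (sK _ _ ha) (sK _ _ hb) in c1 c2.
rewrite (sK _ _ ha) normr_gt0 in sa0; rewrite (sK _ _ hb) normr_gt0 in sb0.
split => //; rewrite normrM ltr_norml; apply/andP; split; lra.
Qed.

Lemma L_alg (a b t t' : R) : a != 0 -> b != 0 ->
  a * t * `|b| - Num.sg a * Num.sg b * (b * t') * `|a| = 0 -> t = t'.
Proof.
move=> a0 b0 h.
have e1 : Num.sg b * b = `|b| by rewrite normrEsg.
have e2 : Num.sg a * `|a| = a by rewrite -numEsg.
have e3 : Num.sg a * Num.sg b * (b * t') * `|a| = (Num.sg a * `|a|) * (Num.sg b * b) * t' by ring.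
rewrite e3 e1 e2 in h.
have : a * `|b| * (t - t') = 0 by rewrite -h; ring.
move/eqP; rewrite !mulf_eq0 normr_eq0 (negbTE a0) (negbTE b0) /= subr_eq0.
by move/eqP.
Qed.

Lemma dot2_ge0 x : 0 <= dot2 x x.
Proof. by rewrite /dot2 -!expr2 addr_ge0 ?sqr_ge0. Qed.

Lemma dot2_eq0 x : dot2 x x = 0 -> x = (0, 0).
Proof.
case: x => a b; rewrite /dot2 /= -!expr2 => /eqP.
rewrite paddr_eq0 ?sqr_ge0 // !sqrf_eq0 => /andP[/eqP-> /eqP->] //.
Qed.

Lemma cld_pos x y : (x, y) != ((0, 0), (0, 0)) -> dot2 x x = dot2 y y -> 0 < dot2 x x.
Proof.
move=> nz e; rewrite lt_neqAle dot2_ge0 andbT eq_sym; apply/eqP => h.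
move/eqP: nz; apply; rewrite (dot2_eq0 h) (dot2_eq0 (esym (etrans (esym h) e))) //.
Qed.

Lemma unit_n x : 0 < dot2 x x -> dot2 (normalize2 x) (normalize2 x) = 1.
Proof.
move=> hp.
have H : norm2 x ^+ 2 = dot2 x x by rewrite /norm2 sqr_sqrtr // ltW.
have r0 : norm2 x != 0 by rewrite /norm2 gt_eqF // sqrtr_gt0.
have -> : dot2 (normalize2 x) (normalize2 x) = dot2 x x / norm2 x ^+ 2.
  by rewrite /normalize2 /scale2 /dot2 /= expr2 invfM; ring.
by rewrite -H divff // expf_neq0.
Qed.

Lemma real_n F G x y : norm2 x = norm2 y -> iota F x = iota G y ->
  iota F (normalize2 x) = iota G (normalize2 y).
Proof. by move=> hn e; rewrite /normalize2 !iotaZ hn e. Qed.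

Lemma angle_n x y : angle2 x y = acos (dot2 (normalize2 x) (normalize2 y)).
Proof.
rewrite /angle2 /normalize2 /scale2 /dot2 /=; congr acos.
by rewrite invfM; ring.
Qed.

Lemma scale2_1 x : scale2 1 x = x.
Proof. by case: x => a b; rewrite /scale2 /= !mul1r. Qed.

Lemma iota10 (F : 'cV[R]_3 * 'cV[R]_3) : iota F (1, 0) = F.1.
Proof. by rewrite /iota /= scale1r scale0r addr0. Qed.
Lemma iota01 (F : 'cV[R]_3 * 'cV[R]_3) : iota F (0, 1) = F.2.
Proof. by rewrite /iota /= scale1r scale0r add0r. Qed.

Lemma mul_iota (X : 'M[R]_3) F G x : dot2 x x = 1 ->
  X *m iota F x = iota G x -> X *m iota F (perp x) = iota G (perp x) ->
  forall z, X *m iota F z = iota G z.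
Proof.
move=> hx h1 h2 z.
by rewrite (iota_decomp F z hx) (iota_decomp G z hx) mulmxDr -!scalemxAr h1 h2.
Qed.

Lemma mul_iota2 (X : 'M[R]_3) F G : act X F = G -> forall z, X *m iota F z = iota G z.
Proof.
move=> e z; rewrite /iota mulmxDr -!scalemxAr.
by rewrite -e.
Qed.
End Sc.

Unset Implicit Arguments.
Local Notation nv v p q := (normalize2 (v p q)).

Theorem lemma1 (R : realType) (N : nat) (v : 'I_N -> 'I_N -> R * R)
  (i j k m : 'I_N) :
  common_lines_data v ->
  uniq [:: i; j; k; m] ->
  strict_sti v i j k -> strict_sti v i j m ->
  L_ijk_ijm v i j k m = 0 ->
  forall Fi Fj Fk Gi Gj Gm : 'cV[R]_3 * 'cV[R]_3,
    is_frame Fi -> is_frame Fj -> is_frame Fk ->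
    is_frame Gi -> is_frame Gj -> is_frame Gm ->
    realizes v i j k Fi Fj Fk ->
    realizes v i j m Gi Gj Gm ->
    exists A : 'M[R]_3,
      [/\ is_O3 A, act A Fi = Gi & act A Fj = Gj] /\
      (forall B : 'M[R]_3, [/\ is_O3 B, act B Fi = Gi & act B Fj = Gj] -> B = A).
Proof.
move=> hcl hu Sk Sm HL Fi Fj Fk Gi Gj Gm fi fj fk gi gj gm [E1 [E2 E3]] [E1' [E2' E3']].
move: hu; rewrite /= !inE !negb_or => /and4P[/and3P[ij ik im] /andP[jk jm] km _].
have ji : j != i by rewrite eq_sym.
have ki : k != i by rewrite eq_sym.
have kj : k != j by rewrite eq_sym.
have mi : m != i by rewrite eq_sym.
have mj : m != j by rewrite eq_sym.
have pos p q : p != q -> 0 < dot2 (v p q) (v p q).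
  by move=> h; apply: (cld_pos (hcl p q h).1 (hcl p q h).2).
have un p q : p != q -> dot2 (nv v p q) (nv v p q) = 1.
  by move=> h; apply: unit_n; apply: pos.
have nrm p q : p != q -> norm2 (v p q) = norm2 (v q p).
  by move=> h; rewrite /norm2 (hcl p q h).2.
have e1 := real_n (nrm i j ij) E1.
have e2 := real_n (nrm i k ik) E2.
have e3 := real_n (nrm j k jk) E3.
have e1' := real_n (nrm i j ij) E1'.
have e2' := real_n (nrm i m im) E2'.
have e3' := real_n (nrm j m jm) E3'.
have ck := core fi fj fk (un i j ij) (un j i ji) e1 e2 e3.
have cm := core gi gj gm (un i j ij) (un j i ji) e1' e2' e3'.
set t := dot3 (iota Fi (perp (nv v i j))) (iota Fj (perp (nv v j i))) in ck.
set t' := dot3 (iota Gi (perp (nv v i j))) (iota Gj (perp (nv v j i))) in cm.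
have L2 p q r : p != q -> p != r -> dot2 (nv v p q) (nv v p r) ^+ 2 + det2 (nv v p q) (nv v p r) ^+ 2 = 1.
  by move=> h h'; rewrite lagrange un // un // mulr1.
have := Sk 1 1 1 (oner_neq0 R) (oner_neq0 R) (oner_neq0 R).
rewrite /= !scale2_1 !angle_n => -[h1 h2 h3 h4].
have [Sa0 Sb0 bnd] := tri_bound (L2 _ _ _ ij ik) (L2 _ _ _ ji jk) (L2 _ _ _ ki kj) h1 h2 h3 h4.
have := Sm 1 1 1 (oner_neq0 R) (oner_neq0 R) (oner_neq0 R).
rewrite /= !scale2_1 !angle_n => -[h1' h2' h3' h4'].
have [Sa0' Sb0' bnd'] := tri_bound (L2 _ _ _ ij im) (L2 _ _ _ ji jm) (L2 _ _ _ mi mj) h1' h2' h3' h4'.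
have Xk : dot2 (nv v k i) (nv v k j) - dot2 (nv v i j) (nv v i k) * dot2 (nv v j i) (nv v j k)
   = (det2 (nv v i j) (nv v i k) * det2 (nv v j i) (nv v j k)) * t by rewrite ck; ring.
have Xm : dot2 (nv v m i) (nv v m j) - dot2 (nv v i j) (nv v i m) * dot2 (nv v j i) (nv v j m)
   = (det2 (nv v i j) (nv v i m) * det2 (nv v j i) (nv v j m)) * t' by rewrite cm; ring.
have a0 : det2 (nv v i j) (nv v i k) * det2 (nv v j i) (nv v j k) != 0 by rewrite mulf_neq0.
have b0 : det2 (nv v i j) (nv v i m) * det2 (nv v j i) (nv v j m) != 0 by rewrite mulf_neq0.
rewrite Xk normrM gtr_pMr ?normr_gt0 // in bnd.
have tt' : t = t'.
  move: HL; rewrite /L_ijk_ijm /=.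
  rewrite (_ : det2 (nv v i j) (nv v i k) * det2 (nv v i j) (nv v i m) *
      det2 (nv v j i) (nv v j k) * det2 (nv v j i) (nv v j m) =
      (det2 (nv v i j) (nv v i k) * det2 (nv v j i) (nv v j k)) *
      (det2 (nv v i j) (nv v i m) * det2 (nv v j i) (nv v j m))); last by ring.
  rewrite sgrM Xk Xm => HL.
  exact: (L_alg a0 b0 HL).
have t2 : t ^+ 2 < 1.
  move: bnd; rewrite ltr_norml => /andP[b1 b2]; rewrite expr2; nra.
have uij := un i j ij; have uji := un j i ji.
have cc : dot3 (iota Fi (nv v i j)) (iota Fi (nv v i j)) = 1 by rewrite iota_dot.
have pp : dot3 (iota Fi (perp (nv v i j))) (iota Fi (perp (nv v i j))) = 1
  by rewrite iota_dot // perp_dot.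
have qq : dot3 (iota Fj (perp (nv v j i))) (iota Fj (perp (nv v j i))) = 1
  by rewrite iota_dot // perp_dot.
have cp : dot3 (iota Fi (nv v i j)) (iota Fi (perp (nv v i j))) = 0
  by rewrite iota_dot // perp_dot0.
have cq : dot3 (iota Fi (nv v i j)) (iota Fj (perp (nv v j i))) = 0
  by rewrite e1 iota_dot // perp_dot0.
have cc' : dot3 (iota Gi (nv v i j)) (iota Gi (nv v i j)) = 1 by rewrite iota_dot.
have pp' : dot3 (iota Gi (perp (nv v i j))) (iota Gi (perp (nv v i j))) = 1
  by rewrite iota_dot // perp_dot.
have qq' : dot3 (iota Gj (perp (nv v j i))) (iota Gj (perp (nv v j i))) = 1
  by rewrite iota_dot // perp_dot.
have cp' : dot3 (iota Gi (nv v i j)) (iota Gi (perp (nv v i j))) = 0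
  by rewrite iota_dot // perp_dot0.
have cq' : dot3 (iota Gi (nv v i j)) (iota Gj (perp (nv v j i))) = 0
  by rewrite e1' iota_dot // perp_dot0.
have pq' : dot3 (iota Gi (perp (nv v i j))) (iota Gj (perp (nv v j i))) = t by rewrite tt'.
have [A [[AO Ac Ap Aq] Au]] := build cc pp qq cp cq (erefl t) cc' pp' qq' cp' cq' pq' t2.
exists A; split.
  split => //.
  - have hF := mul_iota uij Ac Ap.
    by rewrite /act -(iota10 Fi) -(iota01 Fi) !hF iota10 iota01; case: (Gi).
  - have Ac2 : A *m iota Fj (nv v j i) = iota Gj (nv v j i) by rewrite -e1 -e1'.
    have hF := mul_iota uji Ac2 Aq.
    by rewrite /act -(iota10 Fj) -(iota01 Fj) !hF iota10 iota01; case: (Gj).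
move=> B [_ BFi BFj].
have hi := mul_iota2 BFi; have hj := mul_iota2 BFj.
by apply: Au; [apply: hi | apply: hi | apply: hj].
Qed.
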